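(* Let $\tau\subset\mathbb{Z}^4_{\ge0}$ be a B-facet which has a $1$-dimensional V-face $F$ that is not a B-face. Then $\tau$ is a $B_1$-facet, or a $B_2$-facet, or a flat border.
   Context: A polytope is a finite subset of $\mathbb{Z}^n$; its dimension is the dimension of its affine span; a face of a finite set $S$ is $S\cap G$ for a face $G$ of the convex hull of $S$. A $k$-simplex is a set of $k+1$ affinely independent points; a $k$-simplex $S\subset\mathbb{Z}^m_{\ge0}$ is a B-simplex if there is an index $i$ with exactly $k$ vertices in $\{x_i=0\}$ and the remaining vertex having $x_i=1$. A B-facet in $\mathbb{Z}^n_{\ge0}$ is a finite set $\tau\subset\mathbb{Z}^n_{\ge0}$ whose affine span is a hyperplane $\{\langle a,x\rangle=b\}$ with all $a_j>0$, such that every $(n-1)$-simplex with vertices in $\tau$ is a B-simplex. A face $F$ of $\tau$ is a V-face if it is contained in a coordinate subspace $E$ (linear span of some standard basis vectors) with $\dim E=\dim F+1$; such $F$ is a B-face if every $(\dim F)$-simplex with vertices in $F$ is a B-simplex when regarded as a subset of $\mathbb{Z}^{E}_{\ge0}\cong\mathbb{Z}^{\dim E}_{\ge0}$ (using only the coordinates of $E$). For $\tau\subset\mathbb{Z}^4_{\ge0}$: $\tau$ is a $B_1$-facet if for some $i$ exactly one point has nonzero $x_i$, with $x_i=1$; a $B_2$-facet if for some distinct $i,j$ all $x\in\tau$ have $(x_i,x_j)\in\{(0,0),(1,0),(0,1)\}$; a flat border if there are distinct $i,j$ and $C\in\tau$ with $C_i=C_j=1$ such that $\tau$ contains at least two distinct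 points with $x_i=x_j=0$ and every point of $\tau$ other than $C$ lies in $\{x_i=0\}\cup\{x_j=0\}$. *)

(* Defs.v *)
From HB Require Import structures.
From mathcomp Require Import all_boot all_order all_algebra.
From mathcomp Require Export finmap.
Set Implicit Arguments. Unset Strict Implicit. Unset Printing Implicit Defensive.
Import Order.TTheory GRing.Theory Num.Theory.
Local Open Scope fset_scope.
Local Open Scope ring_scope.

Definition pt (n : nat) := n.-tuple nat.

Definition vec n (x : pt n) : 'rV[rat]_n := \row_i ((tnth x i)%:R).

Definition pt0 n : pt n := nseq_tuple n 0%N.

(* Dimension of the affine span of a (nonempty) finite set S:
   dim span { s - s0 : s in S } for a fixed s0 in S. *)
Definition adim n (S : {fset pt n}) : nat :=
  let l := enum_fset S in
  \rank (\matrix_(i < size l) (vec (nth (pt0 n) l i) - vec (head (pt0 n) l))).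

Definition simplex n (k : nat) (S : {fset pt n}) : Prop :=
  #|` S| = k.+1 /\ adim S = k.

Definition in_aff n (S : {fset pt n}) (y : 'rV[rat]_n) : Prop :=
  exists c : pt n -> rat,
    \sum_(s <- enum_fset S) c s = 1 /\ \sum_(s <- enum_fset S) c s *: vec s = y.

(* B-simplex, where the distinguished index i is taken in the coordinate set J
   (J = all coordinates for simplices in Z^n; J = E for simplices in Z^E). *)
Definition Bsimplex_on n (J : {set 'I_n}) (S : {fset pt n}) : Prop :=
  exists2 i, i \in J &
    (#|` [fset x in S | tnth x i == 0%N]|).+1 = #|` S| /\
    (forall x, x \in S -> tnth x i != 0%N -> tnth x i = 1%N).

Definition Bsimplex n (S : {fset pt n}) : Prop := Bsimplex_on setT S.

Definition Bfacet n (tau : {fset pt n}) : Prop :=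
  (exists (a : 'I_n -> rat) (b : rat),
      (forall j, 0 < a j) /\
      (forall y : 'rV[rat]_n, in_aff tau y <-> \sum_j a j * y 0 j = b)) /\
  (forall S : {fset pt n}, S `<=` tau -> simplex n.-1 S -> Bsimplex S).

(* Faces of a finite set S: S ∩ G for G a face of conv S, i.e. the points of S
   on a supporting hyperplane (c = 0 allowed; it gives S itself or the empty set). *)
Definition face n (S F : {fset pt n}) : Prop :=
  exists (c : 'I_n -> rat) (m : rat),
    (forall s, s \in S -> \sum_j c j * (vec s) 0 j <= m) /\
    F = [fset s in S | \sum_j c j * (vec s) 0 j == m].

Definition in_coord_subspace n (J : {set 'I_n}) (F : {fset pt n}) : Prop :=
  forall x, x \in F -> forall j, j \notin J -> tnth x j = 0%N.

Definition Vface_wrt n (tau F : {fset pt n}) (J : {set 'I_n}) : Prop :=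
  face tau F /\ in_coord_subspace J F /\ #|J| = (adim F).+1.

Definition Bface_wrt n (F : {fset pt n}) (J : {set 'I_n}) : Prop :=
  forall S : {fset pt n}, S `<=` F -> simplex (adim F) S -> Bsimplex_on J S.

Definition B1facet (tau : {fset pt 4}) : Prop :=
  exists i : 'I_4,
    #|` [fset x in tau | tnth x i != 0%N]| = 1%N /\
    (forall x, x \in tau -> tnth x i != 0%N -> tnth x i = 1%N).

Definition B2facet (tau : {fset pt 4}) : Prop :=
  exists i j : 'I_4, i != j /\
    forall x, x \in tau ->
      (tnth x i, tnth x j) \in [:: (0, 0); (1, 0); (0, 1)]%N.

Definition flat_border (tau : {fset pt 4}) : Prop :=
  exists (i j : 'I_4) (C : pt 4), i != j /\ C \in tau /\
    tnth C i = 1%N /\ tnth C j = 1%N /\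
    (2 <= #|` [fset x in tau | (tnth x i == 0%N) && (tnth x j == 0%N)]|)%N /\
    (forall x, x \in tau -> x != C -> tnth x i = 0%N \/ tnth x j = 0%N).

(* Main.v *)
Require Import Defs.
From mathcomp Require Import all_boot all_order all_algebra finmap.
From Stdlib Require Import Classical.
From mathcomp Require Import zify ring lra.
Set Implicit Arguments. Unset Strict Implicit. Unset Printing Implicit Defensive.
Import Order.TTheory GRing.Theory Num.Theory.
Local Open Scope fset_scope.

Lemma cover4 (i j k l m : 'I_4) : uniq [:: i; j; k; l] -> m \in [:: i; j; k; l].
Proof.
case: i j k l m => [[|[|[|[|?]]]] Hi] [[|[|[|[|?]]]] Hj] [[|[|[|[|?]]]] Hk]
  [[|[|[|[|?]]]] Hl] [[|[|[|[|?]]]] Hm] //.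
Qed.

Lemma ext_kl (i j : 'I_4) : i != j -> exists k l : 'I_4, uniq [:: i; j; k; l].
Proof.
case: i j => [[|[|[|[|?]]]] Hi] [[|[|[|[|?]]]] Hj] // _;
first [ by exists (@Ordinal 4 0 isT), (@Ordinal 4 1 isT)
      | by exists (@Ordinal 4 0 isT), (@Ordinal 4 2 isT)
      | by exists (@Ordinal 4 0 isT), (@Ordinal 4 3 isT)
      | by exists (@Ordinal 4 1 isT), (@Ordinal 4 2 isT)
      | by exists (@Ordinal 4 1 isT), (@Ordinal 4 3 isT)
      | by exists (@Ordinal 4 2 isT), (@Ordinal 4 3 isT) ].
Qed.

Lemma sum4 (R : nmodType) (f : 'I_4 -> R) (i j k l : 'I_4) :
  uniq [:: i; j; k; l] -> (\sum_m f m = f i + f j + f k + f l)%R.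
Proof.
move=> U.
have P : perm_eq (index_enum 'I_4) [:: i; j; k; l].
  apply: uniq_perm => //; first exact: index_enum_uniq.
  by move=> m; rewrite mem_index_enum cover4.
by rewrite (perm_big _ P) /= !big_cons big_nil addr0 !addrA.
Qed.

Lemma ext4 (i j k l : 'I_4) (X Y : pt 4) : uniq [:: i; j; k; l] ->
  tnth X i = tnth Y i -> tnth X j = tnth Y j -> tnth X k = tnth Y k ->
  tnth X l = tnth Y l -> X = Y.
Proof.
move=> U h1 h2 h3 h4; apply: eq_from_tnth => m.
have := cover4 m U; rewrite !inE => /or4P[] /eqP -> //.
Qed.


Local Open Scope ring_scope.

Definition co (X : pt 4) (m : 'I_4) : rat := (tnth X m)%:R.

Lemma in_aff_self (tau : {fset pt 4}) X : X \in tau -> in_aff tau (vec X).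
Proof.
move=> HX; exists (fun s => if s == X then 1 else 0); split.
  rewrite (bigD1_seq X) ?fset_uniq //= ?eqxx.
  by rewrite big1 ?addr0 // => s /negbTE ->.
rewrite (bigD1_seq X) ?fset_uniq //= ?eqxx.
by rewrite big1 ?addr0 ?scale1r // => s /negbTE ->; rewrite scale0r.
Qed.

Lemma on_hyp (tau : {fset pt 4}) (a : 'I_4 -> rat) b :
  (forall y : 'rV[rat]_4, in_aff tau y <-> \sum_j a j * y 0 j = b) ->
  forall X, X \in tau -> \sum_m a m * co X m = b.
Proof.
move=> H X HX; have := (H (vec X)).1 (in_aff_self HX).
by under eq_bigr do rewrite mxE.
Qed.

Lemma aff_const (tau : {fset pt 4}) (g : 'I_4 -> rat) e y :
  (forall X, X \in tau -> \sum_m g m * co X m = e) ->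
  in_aff tau y -> \sum_m g m * y 0 m = e.
Proof.
move=> Hg [c [Hc1 Hcy]]; rewrite -Hcy.
under eq_bigr do rewrite summxE mulr_sumr.
rewrite exchange_big /= -[RHS]mul1r -Hc1 mulr_suml.
apply: eq_big_seq => s Hs.
rewrite -(Hg s Hs) mulr_sumr; apply: eq_bigr => m _.
by rewrite !mxE mulrCA.
Qed.

Lemma SP (tau : {fset pt 4}) (a : 'I_4 -> rat) b :
  (forall j, 0 < a j) ->
  (forall y : 'rV[rat]_4, in_aff tau y <-> \sum_j a j * y 0 j = b) ->
  forall (g : 'I_4 -> rat) e,
  (forall X, X \in tau -> \sum_m g m * co X m = e) ->
  forall m, g m * b = e * a m.
Proof.
move=> Hpos H g e Hg m0.
pose y : 'rV[rat]_4 := \row_j (if j == m0 then b / a m0 else 0).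
have Hy : forall (f : 'I_4 -> rat), \sum_j f j * y 0 j = f m0 * (b / a m0).
  move=> f; rewrite (bigD1 m0) //= big1 ?addr0; first by rewrite mxE eqxx.
  by move=> j /negbTE hj; rewrite mxE hj mulr0.
have Ha : \sum_j a j * y 0 j = b.
  by rewrite Hy mulrC mulfVK // gt_eqF // Hpos.
have := aff_const Hg ((H y).2 Ha); rewrite Hy => <-.
by rewrite mulrA mulfVK // gt_eqF // Hpos.
Qed.

Lemma AI (S : {fset pt 4}) (a : 'I_4 -> rat) b :
  (forall j, 0 < a j) -> (0 < #|` S|)%N ->
  (forall X, X \in S -> \sum_m a m * co X m = b) ->
  (forall g : 'I_4 -> rat, (forall X Y, X \in S -> Y \in S ->
      \sum_m g m * co X m = \sum_m g m * co Y m) ->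
      exists c, forall m, g m = c * a m) ->
  adim S = 3%N.
Proof.
move=> Hpos HS0 Hh Hg; rewrite /adim.
set l := enum_fset S.
set M := \matrix_(i < size l) _.
have Hl0 : (0 < size l)%N by move: HS0.
have Hhead : head (pt0 4) l \in S.
  by rewrite -nth0; apply: mem_nth.
have HnthS : forall t : 'I_(size l), nth (pt0 4) l t \in S.
  by move=> t; apply: mem_nth.
pose A : 'rV[rat]_4 := \row_j a j.
have Hker : \rank (kermx M^T) = (4 - \rank M)%N by rewrite mxrank_ker mxrank_tr.
have H1 : (A <= kermx M^T)%MS.
  apply/sub_kermxP; apply/rowP => t; rewrite !mxE.
  under eq_bigr do rewrite !mxE.
  rewrite -[RHS](subrr b) -{1}(Hh _ (HnthS t)) -(Hh _ Hhead) -sumrB.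
  by apply: eq_bigr => j _; rewrite mulrBr.
have HA : \rank A = 1%N.
  apply/eqP; rewrite eqn_leq rank_leq_row lt0n mxrank_eq0; apply/eqP => /rowP /(_ ord0).
  by rewrite !mxE => /eqP; rewrite gt_eqF // Hpos.
have H2 : (kermx M^T <= A)%MS.
  apply/row_subP => r.
  set v := row r _.
  have Hv : v *m M^T = 0 by rewrite /v -row_mul mulmx_ker row0.
  have Hc : forall t : 'I_(size l), \sum_m v ord0 m * co (nth (pt0 4) l t) m =
      \sum_m v ord0 m * co (head (pt0 4) l) m.
    move=> t; apply/eqP; rewrite -subr_eq0 -sumrB; apply/eqP.
    have H0 := congr1 (fun B : 'M[rat]_(1, size l) => B ord0 t) Hv.
    rewrite /= !mxE in H0; rewrite -[RHS]H0.
    by apply: eq_bigr => j _; rewrite !mxE mulrBr.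
  have [c Hcv] : exists c, forall m, v ord0 m = c * a m.
    apply: Hg => X Y HX HY.
    have HXl : (index X l < size l)%N by rewrite index_mem.
    have HYl : (index Y l < size l)%N by rewrite index_mem.
    have := Hc (Ordinal HXl); have := Hc (Ordinal HYl).
    by rewrite /= !nth_index // => -> ->.
  have -> : v = c *: A by apply/rowP => j; transitivity (c * a j); [exact: Hcv | rewrite !mxE].
  by apply: scalemx_sub.
have := mxrankS H1; have := mxrankS H2; rewrite Hker HA.
have := rank_leq_col M.
lia.
Qed.

Lemma solve2 (u1 u2 v1 v2 x y : rat) : u1 * x + u2 * y = 0 -> v1 * x + v2 * y = 0 ->
  u1 * v2 - u2 * v1 != 0 -> x = 0 /\ y = 0.
Proof.
move=> H1 H2 Hd.
have Hx : x * (u1 * v2 - u2 * v1) = 0.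
  have -> : x * (u1 * v2 - u2 * v1) = v2 * (u1 * x + u2 * y) - u2 * (v1 * x + v2 * y) by ring.
  by rewrite H1 H2; ring.
have Hy : y * (u1 * v2 - u2 * v1) = 0.
  have -> : y * (u1 * v2 - u2 * v1) = u1 * (v1 * x + v2 * y) - v1 * (u1 * x + u2 * y) by ring.
  by rewrite H1 H2; ring.
move: Hx Hy => /eqP; rewrite mulf_eq0 (negbTE Hd) orbF => /eqP -> /eqP; rewrite mulf_eq0 (negbTE Hd) orbF => /eqP -> //.
Qed.

Definition onehot (u v w z : nat) : Prop :=
  (u = 1 /\ v = 0 /\ w = 0 /\ z = 0)%N \/ (u = 0 /\ v = 1 /\ w = 0 /\ z = 0)%N \/
  (u = 0 /\ v = 0 /\ w = 1 /\ z = 0)%N \/ (u = 0 /\ v = 0 /\ w = 0 /\ z = 1)%N.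

Lemma card4 (A B C D : pt 4) : A != B -> A != C -> A != D -> B != C -> B != D -> C != D ->
  #|` A |` (B |` (C |` [fset D]))| = 4%N.
Proof.
move=> h1 h2 h3 h4 h5 h6.
rewrite !cardfsU1 cardfs1 !inE !negb_or h1 h2 h3 h4 h5 h6 //.
Qed.

Lemma Bs_onehot (A B C D : pt 4) : A != B -> A != C -> A != D -> B != C -> B != D -> C != D ->
  Bsimplex (A |` (B |` (C |` [fset D]))) ->
  exists m, onehot (tnth A m) (tnth B m) (tnth C m) (tnth D m).
Proof.
move=> h1 h2 h3 h4 h5 h6 [m _ [Hc Hv]].
set S := A |` _ in Hc Hv.
set N := [fset x in S | tnth x m != 0%N].
have HNS : N `<=` S by apply/fsubsetP => x; rewrite !inE => /andP[].
have HZ : [fset x in S | tnth x m == 0%N] = S `\` N.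
  by apply/fsetP => x; rewrite !inE; case: (tnth x m == 0%N); case: [|| _, _, _ | _].
rewrite HZ cardfsDS // in Hc.
have HNle := fsubset_leq_card HNS.
have /cardfs1P [W HW] : #|` N| == 1%N by apply/eqP; lia.
have HWN : W \in N by rewrite HW inE.
have HWS : W \in S by apply: (fsubsetP HNS).
have HW0 : tnth W m != 0%N by move: HWN; rewrite inE => /andP[].
have HW1 := Hv W HWS HW0.
have Hz : forall x, x \in S -> x != W -> tnth x m = 0%N.
  move=> x Hx HxW; apply/eqP; apply: contraNT HxW => Hx0.
  have HxN : x \in N by rewrite inE /= !inE /= Hx0 andbT; move: Hx; rewrite !inE.
  by move: HxN; rewrite HW inE.
exists m.
have HA : A \in S by rewrite !inE eqxx.
have HB : B \in S by rewrite !inE eqxx ?orbT.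
have HC : C \in S by rewrite !inE eqxx ?orbT.
have HD : D \in S by rewrite !inE eqxx ?orbT.
move: HWS; rewrite !inE => /or4P[] /eqP EW; subst W.
- left; rewrite HW1 !Hz // 1?eq_sym //.
- right; left; rewrite HW1 !Hz // 1?eq_sym //.
- right; right; left; rewrite HW1 !Hz // 1?eq_sym //.
- right; right; right; rewrite HW1 !Hz // 1?eq_sym //.
Qed.

Lemma Lsimp (tau : {fset pt 4}) (a : 'I_4 -> rat) b (i j k l : 'I_4) :
  uniq [:: i; j; k; l] -> (forall m, 0 < a m) ->
  (forall X, X \in tau -> \sum_m a m * co X m = b) ->
  (forall S : {fset pt 4}, S `<=` tau -> simplex 3 S -> Bsimplex S) ->
  forall Y Y' X Z : pt 4, Y \in tau -> Y' \in tau -> X \in tau -> Z \in tau ->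
  Y != Y' -> tnth Y k = tnth Y' k -> tnth Y l = tnth Y' l ->
  (co X k - co Y k) * (co Z l - co Y l) != (co X l - co Y l) * (co Z k - co Y k) ->
  exists m, onehot (tnth Y m) (tnth Y' m) (tnth X m) (tnth Z m).
Proof.
move=> U Hpos Hh HB Y Y' X Z HY HY' HX HZ HYY Hk Hl Hd.
have cok : co Y k = co Y' k by rewrite /co Hk.
have col : co Y l = co Y' l by rewrite /co Hl.
have dXY : X != Y.
  by apply: contraNneq Hd => ->; rewrite !subrr !mul0r.
have dXY' : X != Y'.
  by apply: contraNneq Hd => ->; rewrite -cok -col !subrr !mul0r.
have dZY : Z != Y.
  by apply: contraNneq Hd => ->; rewrite !subrr !mulr0.
have dZY' : Z != Y'.
  by apply: contraNneq Hd => ->; rewrite -cok -col !subrr !mulr0.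
have dXZ : X != Z.
  by apply: contraNneq Hd => ->; rewrite mulrC.
apply: Bs_onehot => //; try by rewrite eq_sym.
apply: HB.
  apply/fsubsetP => x; rewrite !inE => /or4P[] /eqP -> //.
split; first by apply: card4 => //; rewrite eq_sym.
apply: (@AI _ a b) => //; first by rewrite card4 // eq_sym.
  by move=> x; rewrite !inE => /or4P[] /eqP ->; apply: Hh.
move=> g Hg.
have E := fun x y hx hy => Hg x y hx hy.
have mem1 : Y \in Y |` (Y' |` (X |` [fset Z])) by rewrite !inE eqxx.
have mem2 : Y' \in Y |` (Y' |` (X |` [fset Z])) by rewrite !inE eqxx ?orbT.
have mem3 : X \in Y |` (Y' |` (X |` [fset Z])) by rewrite !inE eqxx ?orbT.
have mem4 : Z \in Y |` (Y' |` (X |` [fset Z])) by rewrite !inE eqxx ?orbT.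
have E1 := Hg _ _ mem1 mem2; have E2 := Hg _ _ mem1 mem3; have E3 := Hg _ _ mem1 mem4.
have H1 := Hh _ HY; have H2 := Hh _ HY'; have H3 := Hh _ HX; have H4 := Hh _ HZ.
rewrite !(sum4 _ U) in E1 E2 E3 H1 H2 H3 H4.
rewrite -cok -col in E1 H2.
have ai0 : a i != 0 by rewrite gt_eqF.
have aj0 : a j != 0 by rewrite gt_eqF.
have di0 : co Y i - co Y' i != 0.
  apply/negP => /eqP di.
  have dj : co Y j - co Y' j = 0.
    have : a j * (co Y j - co Y' j) = 0.
      have -> : a j * (co Y j - co Y' j) = (a i * co Y i + a j * co Y j + a k * co Y k + a l * co Y l) -
        (a i * co Y' i + a j * co Y' j + a k * co Y k + a l * co Y l) - a i * (co Y i - co Y' i) by ring.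
      by rewrite H1 H2 di; ring.
    by move/eqP; rewrite mulf_eq0 (negbTE aj0) => /eqP.
  move/negP: HYY; apply; apply/eqP; apply: (ext4 U).
  - by apply/eqP; rewrite -(eqr_nat rat) -subr_eq0; apply/eqP.
  - by apply/eqP; rewrite -(eqr_nat rat) -subr_eq0; apply/eqP.
  - exact: Hk.
  - exact: Hl.
set c := g i / a i.
have gi : g i = c * a i by rewrite /c mulfVK.
have gj : g j = c * a j.
  have dj0 : co Y j - co Y' j != 0.
    apply: contraNneq di0 => dj.
    have : a i * (co Y i - co Y' i) = 0.
      have -> : a i * (co Y i - co Y' i) = (a i * co Y i + a j * co Y j + a k * co Y k + a l * co Y l) -
        (a i * co Y' i + a j * co Y' j + a k * co Y k + a l * co Y l) - a j * (co Y j - co Y' j) by ring.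
      by rewrite H1 H2 dj; ring.
    by move/eqP; rewrite mulf_eq0 (negbTE ai0).
  apply: (mulIf dj0); apply/eqP; rewrite -subr_eq0 -mulrBl; apply/eqP.
  have -> : (g j - c * a j) * (co Y j - co Y' j) =
     (g i * co Y i + g j * co Y j + g k * co Y k + g l * co Y l) -
     (g i * co Y' i + g j * co Y' j + g k * co Y k + g l * co Y l)
     - c * ((a i * co Y i + a j * co Y j + a k * co Y k + a l * co Y l) -
        (a i * co Y' i + a j * co Y' j + a k * co Y k + a l * co Y l))
     + (c * a i - g i) * (co Y i - co Y' i) by ring.
  by rewrite E1 H1 H2 gi; ring.
have [hk hl] : g k - c * a k = 0 /\ g l - c * a l = 0.
  apply: (solve2 (u1 := co X k - co Y k) (u2 := co X l - co Y l)
                 (v1 := co Z k - co Y k) (v2 := co Z l - co Y l)).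
  - have -> : (co X k - co Y k) * (g k - c * a k) + (co X l - co Y l) * (g l - c * a l) =
      (g i * co X i + g j * co X j + g k * co X k + g l * co X l) -
      (g i * co Y i + g j * co Y j + g k * co Y k + g l * co Y l)
      - c * ((a i * co X i + a j * co X j + a k * co X k + a l * co X l) -
        (a i * co Y i + a j * co Y j + a k * co Y k + a l * co Y l))
      + (c * a i - g i) * (co X i - co Y i) + (c * a j - g j) * (co X j - co Y j) by ring.
    by rewrite E2 H1 H3 gi gj; ring.
  - have -> : (co Z k - co Y k) * (g k - c * a k) + (co Z l - co Y l) * (g l - c * a l) =
      (g i * co Z i + g j * co Z j + g k * co Z k + g l * co Z l) -
      (g i * co Y i + g j * co Y j + g k * co Y k + g l * co Y l)
      - c * ((a i * co Z i + a j * co Z j + a k * co Z k + a l * co Z l) -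
        (a i * co Y i + a j * co Y j + a k * co Y k + a l * co Y l))
      + (c * a i - g i) * (co Z i - co Y i) + (c * a j - g j) * (co Z j - co Y j) by ring.
    by rewrite E3 H1 H4 gi gj; ring.
  - by rewrite subr_eq0.
exists c => m; have := cover4 m U; rewrite !inE => /or4P[] /eqP -> //.
- by apply/eqP; rewrite -subr_eq0 hk.
- by apply/eqP; rewrite -subr_eq0 hl.
Qed.

Definition onehot2 (u v : nat) : Prop := (u = 1 /\ v = 0)%N \/ (u = 0 /\ v = 1)%N.

Record Hyps (tau : {fset pt 4}) (a : 'I_4 -> rat) (b : rat) (i j k l : 'I_4) (P Q : pt 4) : Prop := {
  hU : uniq [:: i; j; k; l];
  hpos : forall m, 0 < a m;
  hhyp : forall X, X \in tau -> a i * co X i + a j * co X j + a k * co X k + a l * co X l = b;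
  hsimp : forall Y Y' X Z : pt 4, Y \in tau -> Y' \in tau -> X \in tau -> Z \in tau ->
    Y != Y' -> tnth Y k = tnth Y' k -> tnth Y l = tnth Y' l ->
    (co X k - co Y k) * (co Z l - co Y l) != (co X l - co Y l) * (co Z k - co Y k) ->
    exists m, onehot (tnth Y m) (tnth Y' m) (tnth X m) (tnth Z m);
  hdim : exists R T : pt 4, R \in tau /\ T \in tau /\ (tnth R k * tnth T l != tnth R l * tnth T k)%N;
  hP : P \in tau;
  hQ : Q \in tau;
  hPQ : P != Q;
  hPk : tnth P k = 0%N;
  hPl : tnth P l = 0%N;
  hQk : tnth Q k = 0%N;
  hQl : tnth Q l = 0%N;
  hnBi : ~ onehot2 (tnth P i) (tnth Q i);
  hnBj : ~ onehot2 (tnth P j) (tnth Q j)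
}.

Lemma Hyps_swap tau a b i j k l P Q : Hyps tau a b i j k l P Q -> Hyps tau a b i j l k P Q.
Proof.
case=> U pos hyp simp [R [T [HR [HT Hd]]]] HP HQ HPQ Pk Pl Qk Ql nBi nBj; split => //.
- by move: U; rewrite /= !inE !negb_or => /and4P[/and3P[-> -> ->] /andP[-> ->]]; rewrite eq_sym => ->.
- by move=> X HX; rewrite -(hyp X HX); ring.
- move=> Y Y' X Z HY HY' HX HZ HYY Hl Hk Hd'; apply: simp => //.
  by rewrite eq_sym.
- by exists R, T; split => //; split => //; rewrite eq_sym.
Qed.

Lemma uniq4 (i j k l : 'I_4) : uniq [:: i; j; k; l] ->
  i != j /\ i != k /\ i != l /\ j != k /\ j != l /\ k != l.
Proof. by rewrite /= !inE !negb_or => /and4P[/and3P[-> -> ->] /andP[-> ->] -> _]. Qed.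

Lemma co_inj X Y m : co X m = co Y m -> tnth X m = tnth Y m.
Proof. by move/eqP; rewrite /co eqr_nat => /eqP. Qed.

Lemma weight tau a b i j k l P Q (H : Hyps tau a b i j k l P Q) (Y Y' : pt 4) :
  Y \in tau -> Y' \in tau -> tnth Y k = tnth Y' k -> tnth Y l = tnth Y' l ->
  [/\ (tnth Y i < tnth Y' i -> tnth Y' j < tnth Y j)%N,
      (tnth Y' i < tnth Y i -> tnth Y j < tnth Y' j)%N &
      (tnth Y i = tnth Y' i -> tnth Y j = tnth Y' j)%N].
Proof.
move=> HY HY' Hk Hl.
have E : a i * co Y i + a j * co Y j = a i * co Y' i + a j * co Y' j.
  have h1 := hhyp H HY; have h2 := hhyp H HY'.
  rewrite /co Hk Hl in h1; rewrite /co; lra.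
have ai := hpos H i; have aj := hpos H j.
split.
- move=> lt; rewrite -(ltr_nat rat); rewrite ltNge; apply/negP => le.
  rewrite -(ltr_nat rat) in lt.
  have h1 : a i * co Y i < a i * co Y' i by rewrite ltr_pM2l.
  have h2 : a j * co Y j <= a j * co Y' j by rewrite ler_pM2l.
  clear -h1 h2 E ai aj; lra.
- move=> lt; rewrite -(ltr_nat rat); rewrite ltNge; apply/negP => le.
  rewrite -(ltr_nat rat) in lt.
  have h1 : a i * co Y' i < a i * co Y i by rewrite ltr_pM2l.
  have h2 : a j * co Y' j <= a j * co Y j by rewrite ler_pM2l.
  clear -h1 h2 E ai aj; lra.
- move=> eqi; apply: co_inj; rewrite /co eqi in E.
  apply: (mulfI (x := a j)); first by rewrite gt_eqF.
  rewrite /co; lra.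
Qed.

Lemma PQ_neq tau a b i j k l P Q (H : Hyps tau a b i j k l P Q) :
  tnth P i <> tnth Q i /\ tnth P j <> tnth Q j.
Proof.
have [w1 w2 w3] := weight H (hP H) (hQ H) (etrans (hPk H) (esym (hQk H)))
  (etrans (hPl H) (esym (hQl H))).
have PQ := hPQ H.
split => E.
- move/eqP: PQ; apply; apply: (ext4 (hU H)) => //; [exact: w3 | by rewrite (hPk H) (hQk H) | by rewrite (hPl H) (hQl H)].
- move/eqP: PQ; apply; apply: (ext4 (hU H)) => //; [ | by rewrite (hPk H) (hQk H) | by rewrite (hPl H) (hQl H)].
  case: (ltngtP (tnth P i) (tnth Q i)) => h //; first by move/w1: h; rewrite E ltnn.
  by move/w2: h; rewrite E ltnn.
Qed.

Lemma lia_test (X Y : pt 4) (m : 'I_4) : tnth X m = 1%N -> (tnth Y m = 0%N \/ tnth Y m = tnth X m) -> tnth Y m <> 2%N.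
Proof. lia. Qed.

Lemma det1 (X Y Z : pt 4) (k l : 'I_4) : tnth Z k = 0%N -> tnth Z l = 0%N ->
  (tnth X l * tnth Y k != tnth X k * tnth Y l)%N ->
  (co X k - co Y k) * (co Z l - co Y l) != (co X l - co Y l) * (co Z k - co Y k).
Proof.
move=> Zk Zl; apply: contra => /eqP E; rewrite -(eqr_nat rat) !natrM.
apply/eqP; rewrite /co Zk Zl in E; clear -E; nra.
Qed.

Lemma det0 (R T Y : pt 4) (k l : 'I_4) : tnth Y k = 0%N -> tnth Y l = 0%N ->
  (tnth R k * tnth T l != tnth R l * tnth T k)%N ->
  (co R k - co Y k) * (co T l - co Y l) != (co R l - co Y l) * (co T k - co Y k).
Proof.
move=> Yk Yl; apply: contra => /eqP E; rewrite -(eqr_nat rat) !natrM.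
by rewrite /co Yk Yl !subr0 in E; rewrite E.
Qed.

Lemma oh_first (p q r t : nat) : p <> q -> ~ onehot2 p q -> onehot p q r t -> False.
Proof. rewrite /onehot /onehot2; lia. Qed.

Lemma oh_zero (r t : nat) : onehot 0 0 r t -> onehot2 r t.
Proof. rewrite /onehot /onehot2; lia. Qed.

Lemma S1 tau a b i j k l P Q (H : Hyps tau a b i j k l P Q) (R T : pt 4) :
  R \in tau -> T \in tau -> (tnth R k * tnth T l != tnth R l * tnth T k)%N ->
  onehot2 (tnth R k) (tnth T k) \/ onehot2 (tnth R l) (tnth T l).
Proof.
move=> HR HT Hd.
have [m Hm] := hsimp H (hP H) (hQ H) HR HT (hPQ H)
  (etrans (hPk H) (esym (hQk H))) (etrans (hPl H) (esym (hQl H))) (det0 (hPk H) (hPl H) Hd).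
have [n1 n2] := PQ_neq H.
have := cover4 m (hU H); rewrite !inE => /or4P[] /eqP Em; rewrite Em in Hm.
- by case: (oh_first n1 (hnBi H) Hm).
- by case: (oh_first n2 (hnBj H) Hm).
- by left; move: Hm; rewrite (hPk H) (hQk H) => /oh_zero.
- by right; move: Hm; rewrite (hPl H) (hQl H) => /oh_zero.
Qed.

Lemma oh2_MF (x y z w: nat) : x = 0%N -> w <> 0%N -> z <> 0%N ->
   onehot2 x y \/ onehot2 w z -> y = 1%N.
Proof. rewrite /onehot2; lia. Qed.

Lemma MF tau a b i j k l P Q (H : Hyps tau a b i j k l P Q) (X0 : pt 4) :
  X0 \in tau -> tnth X0 k = 0%N -> tnth X0 l <> 0%N ->
  forall Y : pt 4, Y \in tau -> tnth Y k <> 0%N -> tnth Y l <> 0%N -> tnth Y k = 1%N.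
Proof.
move=> HX k0 l0 Y HY Yk Yl.
have Hd : (tnth X0 k * tnth Y l != tnth X0 l * tnth Y k)%N.
  rewrite k0 mul0n eq_sym muln_eq0 negb_or; apply/andP; split; apply/eqP => //.
exact: (oh2_MF k0 l0 Yl (S1 H HX HY Hd)).
Qed.

Lemma oh_kk (y x z : nat) : y <> 0%N -> onehot y y x z -> False.
Proof. rewrite /onehot; lia. Qed.

Lemma oh_ll (y x : nat) : (y <> 0%N \/ x <> 1%N) -> onehot y y x 0 -> False.
Proof. rewrite /onehot; lia. Qed.

Lemma oh_J (y y' x p : nat) : y <> y' -> onehot y y' x p -> x = 0%N /\ p = 0%N /\ onehot2 y y'.
Proof. rewrite /onehot /onehot2; lia. Qed.

Lemma oh_fin (yi yi' yj yj' : nat) : onehot2 yi yi' -> onehot2 yj yj' ->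
  (yi < yi' -> yj' < yj)%N -> (yi' < yi -> yj < yj')%N ->
  (yi = 1 /\ yj = 0 /\ yi' = 0 /\ yj' = 1)%N \/ (yi = 0 /\ yj = 1 /\ yi' = 1 /\ yj' = 0)%N.
Proof. rewrite /onehot2; lia. Qed.

Lemma Gside tau a b i j k l P Q (H : Hyps tau a b i j k l P Q) (Y Y' X Z : pt 4) :
  Y \in tau -> Y' \in tau -> X \in tau -> Z \in tau -> Y != Y' ->
  tnth Y k = tnth Y' k -> tnth Y l = tnth Y' l ->
  tnth Z k = 0%N -> tnth Z l = 0%N ->
  (tnth X l * tnth Y k != tnth X k * tnth Y l)%N -> tnth Y k <> 0%N ->
  (tnth Y l <> 0%N \/ tnth X l <> 1%N) ->
  tnth Y i <> tnth Y' i -> tnth Y j <> tnth Y' j ->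
  (tnth X i = 0 /\ tnth Z i = 0 /\ onehot2 (tnth Y i) (tnth Y' i))%N \/
  (tnth X j = 0 /\ tnth Z j = 0 /\ onehot2 (tnth Y j) (tnth Y' j))%N.
Proof.
move=> HY HY' HX HZ HYY Hk Hl Zk Zl Hd Yk0 Yl0 di dj.
have [m Hm] := hsimp H HY HY' HX HZ HYY Hk Hl (det1 Zk Zl Hd).
have := cover4 m (hU H); rewrite !inE => /or4P[] /eqP Em; rewrite Em in Hm.
- by left; apply: oh_J.
- by right; apply: oh_J.
- by rewrite -Hk in Hm; case: (oh_kk Yk0 Hm).
- rewrite Zl -Hl in Hm; by case: (oh_ll Yl0 Hm).
Qed.

Lemma G tau a b i j k l P Q (H : Hyps tau a b i j k l P Q) (Y Y' X : pt 4) :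
  Y \in tau -> Y' \in tau -> X \in tau -> Y != Y' ->
  tnth Y k = tnth Y' k -> tnth Y l = tnth Y' l ->
  (tnth X l * tnth Y k != tnth X k * tnth Y l)%N -> tnth Y k <> 0%N ->
  (tnth Y l <> 0%N \/ tnth X l <> 1%N) ->
  [/\ tnth X i = 0%N, tnth X j = 0%N,
    (tnth Y i = 1 /\ tnth Y j = 0 /\ tnth Y' i = 0 /\ tnth Y' j = 1)%N \/
    (tnth Y i = 0 /\ tnth Y j = 1 /\ tnth Y' i = 1 /\ tnth Y' j = 0)%N &
    (tnth P i = 0 /\ tnth Q j = 0)%N \/ (tnth P j = 0 /\ tnth Q i = 0)%N].
Proof.
move=> HY HY' HX HYY Hk Hl Hd Yk0 Yl0.
have [w1 w2 w3] := weight H HY HY' Hk Hl.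
have di : tnth Y i <> tnth Y' i.
  move=> E; move/eqP: HYY; apply; apply: (ext4 (hU H)) => //; exact: w3.
have dj : tnth Y j <> tnth Y' j.
  move=> E; move/eqP: HYY; apply; apply: (ext4 (hU H)) => //.
  case: (ltngtP (tnth Y i) (tnth Y' i)) => h //; first by move/w1: h; rewrite E ltnn.
  by move/w2: h; rewrite E ltnn.
have [n1 n2] := PQ_neq H.
have A1 := Gside H HY HY' HX (hP H) HYY Hk Hl (hPk H) (hPl H) Hd Yk0 Yl0 di dj.
have A2 := Gside H HY HY' HX (hQ H) HYY Hk Hl (hQk H) (hQl H) Hd Yk0 Yl0 di dj.
case: A1 => [[x1 [p1 o1]]|[x1 [p1 o1]]]; case: A2 => [[x2 [q2 o2]]|[x2 [q2 o2]]].
- by case: n1; rewrite p1 q2.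
- split => //; last by left.
  exact: oh_fin.
- split => //; last by right.
  exact: oh_fin.
- by case: n2; rewrite p1 q2.
Qed.

Lemma mkB1 (tau : {fset pt 4}) (m : 'I_4) (Y : pt 4) : Y \in tau -> tnth Y m = 1%N ->
  (forall x : pt 4, x \in tau -> tnth x m <> 0%N -> x = Y) -> B1facet tau.
Proof.
move=> HY Y1 Hu; exists m; split.
  have -> : [fset x in tau | tnth x m != 0%N] = [fset Y].
    apply/fsetP => x; rewrite inE /= !inE; apply/andP/eqP.
      by case=> Hx /eqP Hx0; apply: Hu.
    by move=> ->; rewrite HY Y1.
  by rewrite cardfs1.
by move=> x Hx /eqP Hx0; rewrite (Hu x Hx Hx0).
Qed.

Lemma mkFB (tau : {fset pt 4}) (m1 m2 : 'I_4) (C X1 X2 : pt 4) : m1 != m2 ->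
  C \in tau -> tnth C m1 = 1%N -> tnth C m2 = 1%N ->
  X1 \in tau -> X2 \in tau -> X1 != X2 ->
  tnth X1 m1 = 0%N -> tnth X1 m2 = 0%N -> tnth X2 m1 = 0%N -> tnth X2 m2 = 0%N ->
  (forall x : pt 4, x \in tau -> x != C -> tnth x m1 = 0%N \/ tnth x m2 = 0%N) ->
  flat_border tau.
Proof.
move=> m12 HC C1 C2 H1 H2 d12 a1 a2 b1 b2 Hall.
exists m1, m2, C; do 4!(split => //); split; last exact: Hall.
apply: (leq_trans (n := #|` [fset X1; X2]|)); first by rewrite cardfs2 d12.
apply: fsubset_leq_card; apply/fsubsetP => x; rewrite !inE => /orP[] /eqP ->.
  by rewrite /= ?inE H1 a1 a2.
by rewrite /= ?inE H2 b1 b2.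
Qed.

Lemma FBgen tau a b i j k l P Q (H : Hyps tau a b i j k l P Q) (C X1 : pt 4) (m : 'I_4) :
  (m = i \/ m = j) -> C \in tau -> tnth C m = 1%N -> tnth C k = 1%N ->
  X1 \in tau -> tnth X1 i = 0%N -> tnth X1 j = 0%N -> tnth X1 k = 0%N -> tnth X1 l <> 0%N ->
  (tnth P i = 0 /\ tnth Q j = 0)%N \/ (tnth P j = 0 /\ tnth Q i = 0)%N ->
  (forall x : pt 4, x \in tau -> x != C -> tnth x k <> 0%N -> tnth x m = 0%N) ->
  flat_border tau.
Proof.
move=> Hm HC Cm Ck HX1 x1i x1j x1k x1l pq Hx.
have [ij [ik [il [jk [jl kl]]]]] := uniq4 (hU H).
have mk : m != k by case: Hm => ->.
have x1m : tnth X1 m = 0%N by case: Hm => ->.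
have [Z [HZ [Zm Zk dZ]]] : exists Z : pt 4, [/\ Z \in tau, tnth Z m = 0%N, tnth Z k = 0%N & X1 != Z].
  have dP : X1 != P by apply/eqP => E; apply: x1l; rewrite E (hPl H).
  have dQ : X1 != Q by apply/eqP => E; apply: x1l; rewrite E (hQl H).
  case: Hm pq => -> [[p1 p2]|[p1 p2]].
  - by exists P; split => //; [exact: hP H | exact: hPk H].
  - by exists Q; split => //; [exact: hQ H | exact: hQk H].
  - by exists Q; split => //; [exact: hQ H | exact: hQk H].
  - by exists P; split => //; [exact: hP H | exact: hPk H].
apply: (mkFB mk HC Cm Ck HX1 HZ dZ) => // x Hx' HxC.
case: (eqVneq (tnth x k) 0%N) => [->|xk]; first by right.
by left; apply: Hx => //; apply/eqP.
Qed.

Lemma CaseA1 tau a b i j k l P Q (H : Hyps tau a b i j k l P Q) (X0 Z0 : pt 4) :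
  X0 \in tau -> tnth X0 k = 0%N -> tnth X0 l <> 0%N ->
  Z0 \in tau -> tnth Z0 l = 0%N -> tnth Z0 k <> 0%N ->
  (forall Z : pt 4, Z \in tau -> tnth Z l = 0%N -> tnth Z k <> 0%N -> tnth Z k = 1%N) ->
  B1facet tau \/ B2facet tau \/ flat_border tau.
Proof.
move=> HX0 X0k X0l HZ0 Z0l Z0k HZ1.
have [ij [ik [il [jk [jl kl]]]]] := uniq4 (hU H).
have MFk := MF H HX0 X0k X0l.
have MFl := MF (Hyps_swap H) HZ0 Z0l Z0k.
case: (classic (exists Y : pt 4, [/\ Y \in tau, tnth Y k <> 0%N & tnth Y l <> 0%N])).
  case=> Y [HY Yk Yl].
  have Yk1 := MFk Y HY Yk Yl; have Yl1 := MFl Y HY Yl Yk.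
  case: (classic (exists Y' : pt 4, [/\ Y' \in tau, Y' != Y, tnth Y' k <> 0%N & tnth Y' l <> 0%N])).
    case=> Y' [HY' dY Yk' Yl'].
    have Yk1' := MFk Y' HY' Yk' Yl'; have Yl1' := MFl Y' HY' Yl' Yk'.
    have Hd : (tnth Z0 l * tnth Y k != tnth Z0 k * tnth Y l)%N.
      by rewrite Z0l mul0n Yl1 muln1 eq_sym; apply/eqP.
    have dY2 : Y != Y' by rewrite eq_sym.
    have [z1 z2 pat _] := G H HY HY' HZ0 dY2
      (etrans Yk1 (esym Yk1')) (etrans Yl1 (esym Yl1')) Hd Yk (or_introl Yl).
    have h1 := hhyp H HZ0; rewrite /co z1 z2 (HZ1 Z0 HZ0 Z0l Z0k) Z0l in h1.
    have h2 := hhyp H HY; rewrite /co Yk1 Yl1 in h2.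
    have pi := hpos H i; have pj := hpos H j; have pl := hpos H l.
    exfalso; case: pat => [[p1 [p2 _]]|[p1 [p2 _]]]; rewrite p1 p2 in h2;
      clear -h1 h2 pi pj pl; lra.
  move=> nY'; right; right.
  apply: (mkFB kl HY Yk1 Yl1 (hP H) (hQ H) (hPQ H)); [exact: hPk H | exact: hPl H | exact: hQk H |
    exact: hQl H | ].
  move=> x Hx dx; case: (eqVneq (tnth x k) 0%N) => [->|xk]; first by left.
  case: (eqVneq (tnth x l) 0%N) => [->|xl]; first by right.
  by case: nY'; exists x; split => //; apply/eqP.
move=> noM.
have noM' : forall x : pt 4, x \in tau -> tnth x k <> 0%N -> tnth x l = 0%N.
  move=> x Hx xk; case: (eqVneq (tnth x l) 0%N) => // /eqP xl.
  by case: noM; exists x.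
case: (classic (exists Z1 : pt 4, [/\ Z1 \in tau, Z1 != Z0, tnth Z1 l = 0%N & tnth Z1 k <> 0%N])).
  case=> Z1 [HZ1' dZ Z1l Z1k].
  case: (classic (exists X1 : pt 4, [/\ X1 \in tau, tnth X1 k = 0%N, tnth X1 l <> 0%N & tnth X1 l <> 1%N])).
    case=> X1 [HX1 X1k X1l X1l1].
    have Z0k1 := HZ1 Z0 HZ0 Z0l Z0k.
    have Hd : (tnth X1 l * tnth Z0 k != tnth X1 k * tnth Z0 l)%N.
      by rewrite X1k mul0n Z0k1 muln1; apply/eqP.
    have dZ' : Z0 != Z1 by rewrite eq_sym.
    have [x1i x1j pat pq] := G H HZ0 HZ1' HX1 dZ' (etrans Z0k1 (esym (HZ1 Z1 HZ1' Z1l Z1k)))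
      (etrans Z0l (esym Z1l)) Hd Z0k (or_intror X1l1).
    right; right.
    have gen : forall m, (m = i \/ m = j) -> tnth Z0 m = 1%N -> flat_border tau.
      move=> m Hm Zm.
      apply: (FBgen H Hm HZ0 Zm Z0k1 HX1 x1i x1j X1k X1l pq).
      move=> x Hx dx xk.
      have xl := noM' x Hx xk.
      have dx2 : Z0 != x by rewrite eq_sym.
      have [_ _ pat' _] := G H HZ0 Hx HX1 dx2
        (etrans Z0k1 (esym (HZ1 x Hx xl xk))) (etrans Z0l (esym xl)) Hd Z0k (or_intror X1l1).
      case: Hm Zm => -> Zm; case: pat' => [[a1 [a2 [a3 a4]]]|[a1 [a2 [a3 a4]]]] //.
        by rewrite Zm in a1.
      by rewrite Zm in a2.
    by case: pat => [[p1 _]|[_ [p2 _]]]; [apply: (gen i) | apply: (gen j)]; auto.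
  move=> nX; right; left; exists k, l; split => // x Hx.
  case: (eqVneq (tnth x k) 0%N) => [xk|/eqP xk].
    case: (eqVneq (tnth x l) 0%N) => [xl|/eqP xl]; first by rewrite xk xl !inE.
    have xl1 : tnth x l = 1%N.
      case: (eqVneq (tnth x l) 1%N) => // /eqP xl1.
      by case: nX; exists x.
    by rewrite xk xl1 !inE.
  by rewrite (noM' x Hx xk) (HZ1 x Hx (noM' x Hx xk) xk) !inE.
move=> nZ; left.
apply: (mkB1 HZ0 (HZ1 Z0 HZ0 Z0l Z0k)) => x Hx xk.
case: (eqVneq x Z0) => // dx.
by case: nZ; exists x; split => //; exact: noM'.
Qed.

Lemma CaseB tau a b i j k l P Q (H : Hyps tau a b i j k l P Q) (X0 : pt 4) :
  X0 \in tau -> tnth X0 k = 0%N -> tnth X0 l <> 0%N ->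
  (forall Z : pt 4, Z \in tau -> tnth Z l = 0%N -> tnth Z k = 0%N) ->
  B1facet tau \/ B2facet tau \/ flat_border tau.
Proof.
move=> HX0 X0k X0l noK.
have MFk := MF H HX0 X0k X0l.
have noK' : forall Z : pt 4, Z \in tau -> tnth Z k <> 0%N -> tnth Z l <> 0%N.
  by move=> Z HZ Zk Zl; apply: Zk; apply: noK.
have [Y [HY Yk]] : exists Y : pt 4, Y \in tau /\ tnth Y k <> 0%N.
  apply: NNPP => nY.
  have [R [T [HR [HT Hd]]]] := hdim H.
  have Rk : tnth R k = 0%N by case: (eqVneq (tnth R k) 0%N) => // /eqP Rk; case: nY; exists R.
  have Tk : tnth T k = 0%N by case: (eqVneq (tnth T k) 0%N) => // /eqP Tk; case: nY; exists T.
  by move: Hd; rewrite Rk Tk !muln0 mul0n.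
have Yl := noK' Y HY Yk.
have Yk1 := MFk Y HY Yk Yl.
have same : forall Y' : pt 4, Y' \in tau -> tnth Y' k <> 0%N -> tnth Y' l = tnth Y l.
  move=> Y' HY' Yk'; have Yl' := noK' Y' HY' Yk'; have Yk1' := MFk Y' HY' Yk' Yl'.
  case: (eqVneq (tnth Y' l) (tnth Y l)) => // dl.
  have Hd : (tnth Y k * tnth Y' l != tnth Y l * tnth Y' k)%N.
    by rewrite Yk1 Yk1' mul1n muln1 dl.
  by case: (S1 H HY HY' Hd); rewrite /onehot2 ?Yk1 ?Yk1'; clear -Yl Yl'; lia.
case: (classic (exists Y' : pt 4, [/\ Y' \in tau, Y' != Y & tnth Y' k <> 0%N])).
  case=> Y' [HY' dY Yk'].
  have dY2 : Y != Y' by rewrite eq_sym.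
  have Hd : (tnth X0 l * tnth Y k != tnth X0 k * tnth Y l)%N.
    by rewrite X0k mul0n Yk1 muln1; apply/eqP.
  have [x0i x0j pat pq] := G H HY HY' HX0 dY2
    (etrans Yk1 (esym (MFk Y' HY' Yk' (noK' Y' HY' Yk')))) (esym (same Y' HY' Yk')) Hd Yk (or_introl Yl).
  right; right.
  have gen : forall m, (m = i \/ m = j) -> tnth Y m = 1%N -> flat_border tau.
    move=> m Hm Ym.
    apply: (FBgen H Hm HY Ym Yk1 HX0 x0i x0j X0k X0l pq).
    move=> x Hx dx xk.
    have dx2 : Y != x by rewrite eq_sym.
    have [_ _ pat' _] := G H HY Hx HX0 dx2
      (etrans Yk1 (esym (MFk x Hx xk (noK' x Hx xk)))) (esym (same x Hx xk)) Hd Yk (or_introl Yl).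
    case: Hm Ym => -> Ym; case: pat' => [[a1 [a2 [a3 a4]]]|[a1 [a2 [a3 a4]]]] //.
      by rewrite Ym in a1.
    by rewrite Ym in a2.
  by case: pat => [[p1 _]|[_ [p2 _]]]; [apply: (gen i) | apply: (gen j)]; auto.
move=> nY; left.
apply: (mkB1 HY Yk1) => x Hx xk.
case: (eqVneq x Y) => // dx.
by case: nY; exists x.
Qed.

Lemma Main tau a b i j k l P Q (H : Hyps tau a b i j k l P Q) (X0 : pt 4) :
  X0 \in tau -> tnth X0 k = 0%N -> tnth X0 l <> 0%N ->
  B1facet tau \/ B2facet tau \/ flat_border tau.
Proof.
move=> HX0 X0k X0l.
case: (classic (exists Z0 : pt 4, [/\ Z0 \in tau, tnth Z0 l = 0%N & tnth Z0 k <> 0%N])); last first.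
  move=> nZ; apply: (CaseB H HX0 X0k X0l) => Z HZ Zl.
  case: (eqVneq (tnth Z k) 0%N) => // /eqP Zk.
  by case: nZ; exists Z.
case=> Z0 [HZ0 Z0l Z0k].
case: (classic (exists Z1 : pt 4, [/\ Z1 \in tau, tnth Z1 l = 0%N, tnth Z1 k <> 0%N & tnth Z1 k <> 1%N])).
  case=> Z1 [HZ1 Z1l Z1k Z1k1].
  apply: (CaseA1 (Hyps_swap H) HZ0 Z0l Z0k HX0 X0k X0l) => X HX Xk Xl.
  have Hd : (tnth X k * tnth Z1 l != tnth X l * tnth Z1 k)%N.
    rewrite Xk mul0n eq_sym muln_eq0 negb_or; apply/andP; split; apply/eqP => //.
  by case: (S1 H HX HZ1 Hd); rewrite /onehot2 ?Xk ?Z1l; clear -Z1k1 Xl; lia.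
move=> nZ1; apply: (CaseA1 H HX0 X0k X0l HZ0 Z0l Z0k) => Z HZ Zl Zk.
case: (eqVneq (tnth Z k) 1%N) => // /eqP Zk1.
by case: nZ1; exists Z.
Qed.

Lemma Top tau a b i j k l P Q (H : Hyps tau a b i j k l P Q) :
  B1facet tau \/ B2facet tau \/ flat_border tau.
Proof.
have [R [T [HR [HT Hd]]]] := hdim H.
case: (S1 H HR HT Hd) => -[[e1 e2]|[e1 e2]].
- apply: (Main H HT e2) => Tl; move: Hd; rewrite e1 e2 Tl; by rewrite ?muln0 ?mul0n ?muln1 ?mul1n.
- apply: (Main H HR e1) => Rl; move: Hd; rewrite e1 e2 Rl; by rewrite ?muln0 ?mul0n ?muln1 ?mul1n.
- apply: (Main (Hyps_swap H) HT e2) => Tk; move: Hd; rewrite e1 e2 Tk; by rewrite ?muln0 ?mul0n ?muln1 ?mul1n.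
- apply: (Main (Hyps_swap H) HR e1) => Rk; move: Hd; rewrite e1 e2 Rk; by rewrite ?muln0 ?mul0n ?muln1 ?mul1n.
Qed.

Lemma card2_fset (S : {fset pt 4}) : #|` S| = 2%N -> exists P Q : pt 4, P != Q /\ S = [fset P; Q].
Proof.
move=> HS.
have : S != fset0 by apply/eqP => E; rewrite E cardfs0 in HS.
case/fset0Pn => P HP.
have : #|` S `\ P| == 1%N by rewrite (cardfsD1 P) HP in HS; apply/eqP; lia.
case/cardfs1P => Q HQ.
exists P, Q; split.
  have : Q \in S `\ P by rewrite HQ inE.
  by rewrite in_fsetD1 eq_sym => /andP[].
by rewrite -(fsetD1K HP) HQ.
Qed.

Lemma oh2_Bs (J : {set 'I_4}) (P Q : pt 4) (m : 'I_4) : m \in J -> P != Q ->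
  onehot2 (tnth P m) (tnth Q m) -> Bsimplex_on J [fset P; Q].
Proof.
move=> mJ dPQ Hoh; exists m => //.
rewrite cardfs2 dPQ; split.
  case: Hoh => [[p q]|[p q]].
  - have -> : [fset x in [fset P; Q] | tnth x m == 0%N] = [fset Q].
      apply/fsetP => x; rewrite inE /= !inE.
      case: (eqVneq x Q) => [->|xQ]; first by rewrite q eqxx orbT.
      by rewrite orbF; case: (eqVneq x P) => // ->; rewrite p.
    by rewrite cardfs1.
  - have -> : [fset x in [fset P; Q] | tnth x m == 0%N] = [fset P].
      apply/fsetP => x; rewrite inE /= !inE.
      case: (eqVneq x P) => [->|xP]; first by rewrite p eqxx.
      by rewrite /=; case: (eqVneq x Q) => // ->; rewrite q.
    by rewrite cardfs1.
move=> x; rewrite !inE => /orP[] /eqP -> /eqP; case: Hoh => -[p q]; rewrite ?p ?q; lia.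
Qed.

Theorem lemma2p8 (tau : {fset pt 4}) :
  Bfacet tau ->
  (exists (F : {fset pt 4}) (J : {set 'I_4}),
      Vface_wrt tau F J /\ adim F = 1%N /\ ~ Bface_wrt F J) ->
  B1facet tau \/ B2facet tau \/ flat_border tau.
Proof.
move=> [[a [b [Hpos Hiff]]] HB] [F [J [[[c [mm [_ HF]]] [Hcoord HJ]] [HadF HnB]]]].
have Hh := on_hyp Hiff.
rewrite HadF in HJ.
have /cards2P [i [j [ij HJe]]] : #|J| == 2%N by rewrite HJ.
have [k [l U]] := ext_kl ij.
have [_ [ik [il [jk [jl kl]]]]] := uniq4 U.
have [S [HSF HsS HnS]] : exists S : {fset pt 4}, [/\ S `<=` F, simplex (adim F) S & ~ Bsimplex_on J S].
  apply: NNPP => nE; apply: HnB => S HSF HsS; apply: NNPP => nB; apply: nE; by exists S.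
rewrite HadF in HsS; case: HsS => HS2 _.
have [P [Q [dPQ ES]]] := card2_fset HS2.
have FT : forall x, x \in F -> x \in tau by move=> x; rewrite HF inE => /andP[].
have PF : P \in F by apply: (fsubsetP HSF); rewrite ES !inE eqxx.
have QF : Q \in F by apply: (fsubsetP HSF); rewrite ES !inE eqxx orbT.
have kJ : k \notin J by rewrite HJe !inE negb_or eq_sym ik eq_sym jk.
have lJ : l \notin J by rewrite HJe !inE negb_or eq_sym il eq_sym jl.
have Hh4 : forall X, X \in tau -> a i * co X i + a j * co X j + a k * co X k + a l * co X l = b.
  by move=> X HX; rewrite -(sum4 (fun m => a m * co X m) U); apply: Hh.
have Pk := Hcoord P PF k kJ; have Pl := Hcoord P PF l lJ.
have Qk := Hcoord Q QF k kJ; have Ql := Hcoord Q QF l lJ.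
have hP := FT P PF; have hQ := FT Q QF.
have b0 : b != 0.
  apply/eqP => b0.
  have H1 := Hh4 P hP; have H2 := Hh4 Q hQ.
  have z : forall X m, X \in tau -> (m = i \/ m = j) -> tnth X k = 0%N -> tnth X l = 0%N -> co X m = 0.
    move=> X m HX Hm Xk Xl; have := Hh4 X HX; rewrite /co Xk Xl b0 => E.
    have t1 : 0 <= a i * (tnth X i)%:R by rewrite mulr_ge0 // ltW.
    have t2 : 0 <= a j * (tnth X j)%:R by rewrite mulr_ge0 // ltW.
    have e1 : a i * (tnth X i)%:R = 0 by clear -E t1 t2; lra.
    have e2 : a j * (tnth X j)%:R = 0 by clear -E t1 t2; lra.
    case: Hm => ->; apply/eqP.
      by move/eqP: e1; rewrite mulf_eq0 gt_eqF.
    by move/eqP: e2; rewrite mulf_eq0 gt_eqF.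
  move/eqP: dPQ; apply; apply: (ext4 U).
  - by apply: co_inj; rewrite (z P i hP (or_introl erefl) Pk Pl) (z Q i hQ (or_introl erefl) Qk Ql).
  - by apply: co_inj; rewrite (z P j hP (or_intror erefl) Pk Pl) (z Q j hQ (or_intror erefl) Qk Ql).
  - by rewrite Pk Qk.
  - by rewrite Pl Ql.
apply: (@Top tau a b i j k l P Q); split => //.
- exact: Lsimp U Hpos Hh HB.
- apply: NNPP => nD.
  have Hall : forall R T : pt 4, R \in tau -> T \in tau -> (tnth R k * tnth T l = tnth R l * tnth T k)%N.
    move=> R T HR HT; case: (eqVneq (tnth R k * tnth T l)%N (tnth R l * tnth T k)%N) => // d.
    by case: nD; exists R, T.
  case: (classic (exists R0 : pt 4, R0 \in tau /\ (tnth R0 k <> 0%N \/ tnth R0 l <> 0%N))).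
    case=> R0 [HR0 nz].
    pose g := fun m : 'I_4 => if m == k then co R0 l else if m == l then - co R0 k else 0.
    have Hg : forall X, X \in tau -> \sum_m g m * co X m = 0.
      move=> X HX; rewrite (sum4 _ U) /g eqxx (negbTE ik) (negbTE il) (negbTE jk) (negbTE jl)
        eq_sym (negbTE kl) eqxx !mul0r !add0r.
      have := Hall R0 X HR0 HX => /(congr1 (fun n => n%:R : rat)); rewrite !natrM /co => E.
      by rewrite mulNr E mulrC subrr.
    have gk := SP Hpos Hiff Hg k; have gl := SP Hpos Hiff Hg l.
    rewrite /g eqxx mul0r in gk; rewrite /g eq_sym (negbTE kl) eqxx mul0r in gl.
    move/eqP: gk; rewrite mulf_eq0 (negbTE b0) orbF /co pnatr_eq0 => /eqP gk.
    move/eqP: gl; rewrite mulf_eq0 (negbTE b0) orbF oppr_eq0 /co pnatr_eq0 => /eqP gl.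
    by case: nz.
  move=> nz.
  pose g := fun m : 'I_4 => if m == k then (1 : rat) else 0.
  have Hg : forall X, X \in tau -> \sum_m g m * co X m = 0.
    move=> X HX; rewrite (sum4 _ U) /g eqxx (negbTE ik) (negbTE jk) eq_sym (negbTE kl) !mul0r mul1r.
    case: (eqVneq (tnth X k) 0%N) => [Xk|Xk]; first by rewrite /co Xk !addr0.
    by case: nz; exists X; split => //; left; apply/eqP.
  have := SP Hpos Hiff Hg k; rewrite /g eqxx mul1r mul0r => b00.
  by rewrite b00 eqxx in b0.
- move=> Hoh; apply: HnS; rewrite ES; apply: (oh2_Bs _ dPQ Hoh); by rewrite HJe !inE eqxx.
- move=> Hoh; apply: HnS; rewrite ES; apply: (oh2_Bs _ dPQ Hoh); by rewrite HJe !inE eqxx orbT.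
Qed.
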